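(* Let $\theta$ be an eigenvalue of a distance-regular graph $\Gamma$ with valency $k$ and diameter $3$, and let $u_0,u_1,u_2,u_3$ be its standard sequence. Then the following are equivalent: (i) $u_2(\theta)=0$; (ii) $\theta=a_3$; (iii) $\theta=\frac{a_1+\sqrt{a_1^2+4k}}{2}$. Moreover, if (i)–(iii) hold, then $\theta$ is the second largest eigenvalue of $\Gamma$.
   Context: A connected graph $\Gamma$ of diameter $D$ is distance-regular if there are integers $b_i,c_i$ ($0\le i\le D$) such that for any two vertices $x,y$ at distance $i$, exactly $c_i$ neighbours of $y$ are at distance $i-1$ from $x$ and exactly $b_i$ neighbours of $y$ are at distance $i+1$ from $x$. Then $\Gamma$ is regular of valency $k=b_0$, and $a_i:=k-b_i-c_i$. The eigenvalues of $\Gamma$ are those of its adjacency matrix. For an eigenvalue $\theta$, the standard sequence $u_i=u_i(\theta)$ ($0\le i\le D$) is defined by $u_0=1$, $u_1=\theta/k$, and $c_iu_{i-1}+a_iu_i+b_iu_{i+1}=\theta u_i$ for $1\le i\le D-1$ (and these recurrences, with $b_D=0$, also hold for $i=D$ when $\theta$ is an eigenvalue). *)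

(* Defs.v *)
From HB Require Import structures.
From mathcomp Require Import all_boot all_order all_algebra.
Set Implicit Arguments. Unset Strict Implicit. Unset Printing Implicit Defensive.
Import Order.TTheory GRing.Theory Num.Theory.

Definition simple_graph n (e : rel 'I_n) : Prop :=
  irreflexive e /\ symmetric e.

Fixpoint ball n (e : rel 'I_n) (x : 'I_n) (m : nat) : {set 'I_n} :=
  match m with
  | 0 => [set x]
  | m'.+1 => ball e x m' :|: [set y | [exists z in ball e x m', e z y]]
  end.

(* graph distance (equals n when y is unreachable from x, which never
   happens for the connected graphs considered below) *)
Definition gdist n (e : rel 'I_n) (x y : 'I_n) : nat :=
  find (fun m => y \in ball e x m) (iota 0 n.+1).

Definition distance_regular n (e : rel 'I_n) (D : nat) (b c : nat -> nat) : Prop :=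
  [/\ simple_graph e,
      (forall x y : 'I_n, y \in ball e x D),
      (exists x y : 'I_n, y \notin ball e x D.-1),
      (forall (i : nat) (x y : 'I_n), 1 <= i <= D -> gdist e x y = i ->
          #|[set z | e y z & gdist e x z == i.-1]| = c i) &
      (forall (i : nat) (x y : 'I_n), i <= D -> gdist e x y = i ->
          #|[set z | e y z & gdist e x z == i.+1]| = b i)].

Local Open Scope ring_scope.

Definition adjmx (R : nzRingType) n (e : rel 'I_n) : 'M[R]_n :=
  \matrix_(i, j) (e i j)%:R.

(* valency k = b_0 and a_i = k - b_i - c_i, as elements of R *)
Definition aR (R : nzRingType) (b c : nat -> nat) (i : nat) : R :=
  (b 0%N)%:R - (b i)%:R - (c i)%:R.

(* standard sequence: u_0 = 1, u_1 = theta/k,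
   c_i u_{i-1} + a_i u_i + b_i u_{i+1} = theta u_i for i >= 1 *)
Fixpoint std_seq_aux (R : fieldType) (b c : nat -> nat) (theta : R) (i : nat)
  : R * R :=
  (* returns (u_i, u_{i+1}) *)
  match i with
  | 0 => (1, theta / (b 0%N)%:R)
  | i'.+1 =>
      let (p, q) := std_seq_aux b c theta i' in
      (q, ((theta - aR R b c i) * q - (c i)%:R * p) / (b i)%:R)
  end.

Definition std_seq (R : fieldType) (b c : nat -> nat) (theta : R) (i : nat) : R :=
  (std_seq_aux b c theta i).1.

(* Main.v *)
Require Import Defs.
From mathcomp Require Import all_boot all_order all_algebra.
From mathcomp Require Import ring lra zify.
Import Order.TTheory GRing.Theory Num.Theory.

Section AlgS.
Local Open Scope ring_scope.


Definition Gp {R : realFieldType} (th t b2 c2 x : R) : R :=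
  (x - t) * ((- (th * t) - th) * b2 - (x - th) * (x - (- (th * t) - b2 - c2)))
  + c2 * (- (th * t) - th - t - 1) * x.

Definition Qp {R : realFieldType} (th t b2 c2 x : R) : R :=
  x ^+ 2 + (- (th * t) - th - t - (- (th * t) - b2 - c2)) * x
  - (- (th * t) - b2 - c2) - (t + 1) * b2.

Lemma GQ {R : realFieldType} (th t b2 c2 x : R) : Gp th t b2 c2 x = - (x + th * t) * Qp th t b2 c2 x.
Proof. rewrite /Gp /Qp. ring. Qed.

Lemma alg_main {R : realFieldType} (th t b2 c2 eta : R) :
  0 < th -> t < 0 -> 1 <= - (th * t) - th - t - 1 -> 1 <= b2 -> 1 <= c2 ->
  1 <= - (th * t) - th ->
  th < eta -> Gp th t b2 c2 eta = 0 -> eta = - (th * t).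
Proof.
move=> hth ht hb1 hb2 hc2 hc3 hlt hG.
have hQth : 0 < Qp th t b2 c2 th.
  have e := GQ th t b2 c2 th.
  move: e; rewrite /Gp subrr mul0r subr0.
  set Q := Qp _ _ _ _ _ => e.
  have h1 : 0 <= (- (th * t) - th) * b2 * (th - t).
    apply: mulr_ge0; [apply: mulr_ge0|]; lra.
  have h2 : 0 < c2 * (- (th * t) - th - t - 1) * th.
    apply: mulr_gt0; [apply: mulr_gt0|]; lra.
  have hk : 0 < - (th + th * t) by lra.
  rewrite -(pmulr_rgt0 _ hk) -e; lra.
have hQt : Qp th t b2 c2 t < 0.
  have e := GQ th t b2 c2 t.
  move: e; rewrite /Gp subrr mul0r add0r.
  set Q := Qp _ _ _ _ _ => e.
  have h2 : c2 * (- (th * t) - th - t - 1) * t < 0.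
    by rewrite pmulr_rlt0 // mulr_gt0 //; lra.
  have hk : 0 < - (t + th * t) by nra.
  rewrite -(pmulr_rlt0 _ hk) -e; lra.
have conv : forall x, (x - t) * Qp th t b2 c2 th =
   (x - th) * Qp th t b2 c2 t + (th - t) * Qp th t b2 c2 x - (x - th) * (th - t) * (x - t).
  by move=> x; rewrite /Qp; ring.
move: hG; rewrite GQ => /eqP; rewrite mulf_eq0 => /orP [/eqP h|/eqP hQ].
  lra.
exfalso.
have := conv eta; rewrite hQ mulr0 addr0 => e.
have h1 : 0 < (eta - t) * Qp th t b2 c2 th by apply: mulr_gt0 => //; lra.
have h2 : (eta - th) * Qp th t b2 c2 t < 0 by rewrite pmulr_rlt0 //; lra.
have h3 : 0 < (eta - th) * (th - t) * (eta - t) by apply: mulr_gt0; [apply: mulr_gt0|]; lra.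
lra.
Qed.

Lemma algF (R : rcfType) (k a1 a2 a3 b1 b2 c2 c3 eta s0 s1 s2 s3 : R) :
  s0 != 0 -> eta * s0 = s1 -> eta * s1 = k * s0 + a1 * s1 + c2 * s2 ->
  eta * s2 = b1 * s1 + a2 * s2 + c3 * s3 -> eta * s3 = b2 * s2 + a3 * s3 ->
  c3 * b2 * (eta ^+ 2 - a1 * eta - k)
  + (a3 - eta) * ((eta - a2) * (eta ^+ 2 - a1 * eta - k) - c2 * b1 * eta) = 0.
Proof.
move=> hs0 e0 e1 e2 e3.
subst s1.
have h2 : c2 * s2 = (eta ^+ 2 - a1 * eta - k) * s0.
  have -> : c2 * s2 = eta * (eta * s0) - k * s0 - a1 * (eta * s0) by rewrite e1; ring.
  ring.
have h3 : c2 * c3 * s3 = ((eta - a2) * (eta ^+ 2 - a1 * eta - k) - c2 * b1 * eta) * s0.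
  have -> : c2 * c3 * s3 = c2 * (eta * s2 - b1 * (eta * s0) - a2 * s2) by rewrite e2; ring.
  have -> : c2 * (eta * s2 - b1 * (eta * s0) - a2 * s2) = (eta - a2) * (c2 * s2) - c2 * b1 * eta * s0 by ring.
  rewrite h2; ring.
set F := (X in X = 0).
have : s0 * F = 0.
  have -> : s0 * F = c3 * b2 * ((eta ^+ 2 - a1 * eta - k) * s0)
     + (a3 - eta) * (((eta - a2) * (eta ^+ 2 - a1 * eta - k) - c2 * b1 * eta) * s0) by rewrite /F; ring.
  rewrite -h2 -h3.
  have -> : c3 * b2 * (c2 * s2) + (a3 - eta) * (c2 * c3 * s3) = c2 * c3 * (b2 * s2 + a3 * s3 - eta * s3) by ring.
  by rewrite e3 subrr mulr0.
by move/eqP; rewrite mulf_eq0 (negbTE hs0) /= => /eqP.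
Qed.

End AlgS.

Section Comb.
Variables (n : nat) (e : rel 'I_n) (b c : nat -> nat).
Hypothesis DR : distance_regular e 3 b c.

Lemma ball_monoW x m m' : m <= m' -> {subset ball e x m <= ball e x m'}.
Proof.
elim: m' => [|m' IH]; first by rewrite leqn0 => /eqP ->.
rewrite leq_eqVlt => /orP [/eqP -> //|hlt] y hy.
by rewrite /= inE (IH hlt y hy).
Qed.

Lemma dist_ball x y m : m <= n -> (y \in ball e x m) = (gdist e x y <= m).
Proof.
move=> hm; rewrite /gdist.
set s := iota 0 n.+1; set a := fun m => y \in ball e x m.
apply/idP/idP.
- move=> hy. have hs : a (nth 0 s m) by rewrite /s nth_iota ?add0n //; lia.
  case: (leqP (find a s) m) => // hlt.
  by have := before_find 0 hlt; rewrite hs.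
- move=> hle. have hf : find a s < size s by rewrite size_iota; lia.
  have hh : has a s by rewrite has_find.
  have := nth_find 0 hh.
  rewrite /s nth_iota ?add0n; last by move: hf; rewrite size_iota.
  by move=> hy; apply: (ball_monoW x _ _ hle y); exact: hy.
Qed.

Lemma ball0E x : ball e x 0 = [set x]. Proof. by []. Qed.
Lemma ballSE x m y : (y \in ball e x m.+1) = (y \in ball e x m) || [exists z in ball e x m, e z y].
Proof. by rewrite /= !inE. Qed.

Lemma chain : exists x0 z1 z2 y0,
  (z1 \in ball e x0 1) && (z1 \notin ball e x0 0) && (z2 \in ball e x0 2) && (z2 \notin ball e x0 1) &&
      (y0 \in ball e x0 3) && (y0 \notin ball e x0 2) && e z1 z2 && e z2 y0.
Proof.
case: DR => [[irr sym] hall [x0 [y0 hy0]] hc hb].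
have hy3 := hall x0 y0.
move: (hy3); rewrite (ballSE x0 2) (negbTE hy0) /= => /existsP [z2 /andP [hz2 ez2]].
have hz2n : z2 \notin ball e x0 1.
  apply/negP => h; move: hy0; rewrite (ballSE x0 1); apply/negP; rewrite negbK.
  by apply/orP; right; apply/existsP; exists z2; rewrite h.
move: (hz2); rewrite (ballSE x0 1) (negbTE hz2n) /= => /existsP [z1 /andP [hz1 ez1]].
have hz1n : z1 \notin ball e x0 0.
  apply/negP => h; move: hz2n; rewrite (ballSE x0 0); apply/negP; rewrite negbK.
  by apply/orP; right; apply/existsP; exists z1; rewrite h.
by exists x0, z1, z2, y0; rewrite hz1 hz1n hz2 hz2n hy3 hy0 ez1 ez2.
Qed.

Lemma n_ge3 : 3 <= n.
Proof.
have [x0 [z1 [z2 [y0 /andP[/andP[/andP[/andP[/andP[/andP[/andP[h1 h1n] h2] h2n] h3] h3n] e12] e23]]]]] := chain.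
have hx0 : x0 \in ball e x0 2 by apply: (ball_monoW x0 0 2) => //; rewrite /= inE.
have hz1 : z1 \in ball e x0 2 by apply: (ball_monoW x0 1 2).
have hu : uniq [:: x0; z1; y0].
  rewrite /= !inE negb_or; apply/and3P; split.
  - apply/andP; split; apply/negP => /eqP E.
    + by move: h1n; rewrite E /= inE eqxx.
    + by move: h3n; rewrite -E hx0.
  - by apply/negP => /eqP E; move: h3n; rewrite -E hz1.
  - by [].
have := card_uniqP hu; rewrite /= => <-.
by have := max_card (mem [:: x0; z1; y0]); rewrite card_ord.
Qed.


Lemma DRirr x : e x x = false.
Proof. by case: DR => [[irr sym] _ _ _ _]; apply: irr. Qed.
Lemma DRsym x y : e x y = e y x.
Proof. by case: DR => [[irr sym] _ _ _ _]; apply: sym. Qed.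

Lemma d3 x y : gdist e x y <= 3.
Proof. case: DR => [_ hall _ _ _]; by rewrite -dist_ball ?n_ge3. Qed.

Lemma d0 x y : (gdist e x y == 0) = (y == x).
Proof.
have h : 0 <= n by [].
by rewrite -leqn0 -dist_ball // /= inE.
Qed.

Lemma dxx x : gdist e x x = 0.
Proof. by apply/eqP; rewrite d0. Qed.

Lemma in_ball_d x y : y \in ball e x (gdist e x y).
Proof. by rewrite dist_ball //; apply: leq_trans (d3 x y) n_ge3. Qed.

Lemma dist_adj x w z : e w z -> gdist e x z <= (gdist e x w).+1.
Proof.
move=> ewz.
case: (ltnP (gdist e x w) 3) => h; last by have := d3 x z; lia.
rewrite -dist_ball; last by have := n_ge3; lia.
rewrite ballSE; apply/orP; right; apply/existsP; exists w.
by rewrite in_ball_d ewz.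
Qed.

Lemma adj_d1 w z : e w z -> gdist e w z = 1.
Proof.
move=> ewz; apply/eqP; rewrite eqn_leq; apply/andP; split.
  have hn := n_ge3.
  rewrite -dist_ball; last lia.
  by rewrite ballSE; apply/orP; right; apply/existsP; exists w; rewrite /= inE eqxx ewz.
rewrite lt0n d0; apply/negP => /eqP E; by move: ewz; rewrite E DRirr.
Qed.

Definition Nc x i w := #|[set z | e w z & gdist e x z == i]|.

Lemma Nc_far x w i : (i.+1 < gdist e x w) || ((gdist e x w).+1 < i) -> Nc x i w = 0.
Proof.
move=> h; apply/eqP; rewrite cards_eq0; apply/eqP/setP => z; rewrite !inE.
apply/negP => /andP [ewz /eqP dz].
have h1 := dist_adj x w z ewz.
have h2 : gdist e x w <= (gdist e x z).+1 by apply: (dist_adj x z w); rewrite DRsym.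
move: h h1 h2; rewrite dz; lia.
Qed.

Lemma deg_b0 w : #|[set z | e w z]| = b 0.
Proof.
case: DR => [_ _ _ _ hb].
rewrite -(hb 0 w w) ?dxx //; apply: eq_card => z; rewrite !inE.
by case ewz: (e w z) => //=; rewrite adj_d1.
Qed.


Lemma Nc4 x w : Nc x 4 w = 0.
Proof.
apply/eqP; rewrite cards_eq0; apply/eqP/setP => z; rewrite !inE.
apply/negP => /andP [_ /eqP dz]; have := d3 x z; lia.
Qed.

Local Open Scope ring_scope.

Lemma sum_cnt (R : rcfType) w (P : pred 'I_n) :
  \sum_(z | P z) ((e w z)%:R : R) = (#|[set z | e w z & P z]|)%:R.
Proof.
rewrite (eq_bigr (fun z => if e w z then 1 else 0)); last by move=> z _; case: (e w z).
rewrite -big_mkcondr sumr_const; congr (_ *+ _).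
by apply: eq_card => z; rewrite !inE andbC.
Qed.

Lemma part (R : rcfType) x (f : 'I_n -> R) :
  \sum_z f z = \sum_(i < 4) \sum_(z | gdist e x z == i) f z.
Proof.
rewrite (partition_big (fun z => (inord (gdist e x z) : 'I_4)) predT) //.
apply: eq_bigr => i _; apply: eq_bigl => z /=.
by rewrite -val_eqE /= inordK // ltnS d3.
Qed.

Lemma deg_R (R : rcfType) x w : ((b 0)%:R : R) = \sum_(i < 4) ((Nc x i w)%:R : R).
Proof.
rewrite -(deg_b0 w).
have -> : (#|[set z | e w z]|%:R : R) = \sum_z (e w z)%:R.
  rewrite (sum_cnt R w predT); congr (_ %:R); apply: eq_card => z; by rewrite !inE andbT.
rewrite (part R x); apply: eq_bigr => i _; by rewrite sum_cnt.
Qed.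

Definition M (R : rcfType) (i j : nat) : R :=
  if i == j.+1 then (b j)%:R else if j == i.+1 then (c j)%:R
  else if i == j then (if j == 0%N then 0 else aR R b c j) else 0.

Lemma Nval (R : rcfType) x w i : (i < 4)%N -> ((Nc x i w)%:R : R) = M R i (gdist e x w).
Proof.
move=> hi; case: DR => [_ _ _ hc hb].
have hj := d3 x w; set j := gdist e x w in hj *.
have hjd : gdist e x w = j by [].
rewrite /M.
case: ifP => [/eqP ->| h1]; first by rewrite /Nc (hb j x w).
case: ifP => [/eqP Ej | h2].
  have -> : i = j.-1 by lia.
  by rewrite /Nc (hc j x w) //; apply/andP; lia.
case: ifP => [/eqP Eij | h3]; last by rewrite Nc_far //; move: h1 h2 h3; rewrite -/j; lia.
subst i; case: ifP => [/eqP j0 | j0].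
  have wx : w = x by apply/eqP; rewrite -d0 -/j j0.
  subst w; rewrite j0; apply/eqP; rewrite pnatr_eq0 cards_eq0; apply/eqP/setP => z.
  rewrite !inE d0; apply/negP => /andP [exz /eqP zx]; by move: exz; rewrite zx DRirr.
have hdeg := deg_R R x w.
rewrite !big_ord_recr big_ord0 /= add0r in hdeg.
rewrite /aR.
have : (j == 1 \/ j == 2 \/ j == 3)%N by lia.
case=> [/eqP j1|[/eqP j1|/eqP j1]]; rewrite j1 in hdeg hjd *.
- have c0 : Nc x 0 w = c 1 by rewrite /Nc (hc 1 x w).
  have c2 : Nc x 2 w = b 1 by rewrite /Nc (hb 1 x w).
  have c3 : Nc x 3 w = 0%N by rewrite Nc_far // hjd.
  move: hdeg; rewrite c0 c2 c3 => ->; rewrite /=; ring.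
- have c0 : Nc x 0 w = 0%N by rewrite Nc_far // hjd.
  have c1 : Nc x 1 w = c 2 by rewrite /Nc (hc 2 x w).
  have c3 : Nc x 3 w = b 2 by rewrite /Nc (hb 2 x w).
  move: hdeg; rewrite c0 c1 c3 => ->; rewrite /=; ring.
- have c0 : Nc x 0 w = 0%N by rewrite Nc_far // hjd.
  have c1 : Nc x 1 w = 0%N by rewrite Nc_far // hjd.
  have c2 : Nc x 2 w = c 3 by rewrite /Nc (hc 3 x w).
  have e4 : b 3 = 0%N by have := Nc4 x w; rewrite /Nc (hb 3 x w).
  move: hdeg; rewrite c0 c1 c2 e4 => ->; rewrite /=; ring.
Qed.


Definition sv (R : rcfType) x (v : 'rV[R]_n) (i : nat) : R :=
  \sum_(z | gdist e x z == i) v 0 z.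
Arguments sv {R}.

Lemma recur (R : rcfType) (x : 'I_n) (v : 'rV[R]_n) eta :
  v *m adjmx R e = eta *: v -> forall i, (i < 4)%N ->
  eta * sv x v i = \sum_(j < 4) M R i j * sv x v j.
Proof.
move=> hv i hi.
rewrite /sv mulr_sumr.
transitivity (\sum_(z | gdist e x z == i) (v *m adjmx R e) 0 z).
  by apply: eq_bigr => z _; rewrite hv mxE.
under eq_bigr do rewrite mxE.
rewrite exchange_big /=.
transitivity (\sum_w v 0 w * M R i (gdist e x w)).
  apply: eq_bigr => w _; rewrite -mulr_sumr -(Nval R x w _ hi) /Nc -sum_cnt.
  by congr (_ * _); apply: eq_bigr => z _; rewrite mxE.
rewrite (part R x); apply: eq_bigr => j _; rewrite mulr_sumr.
by apply: eq_bigr => w /eqP ->; rewrite mulrC.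
Qed.

Lemma sv0 (R : rcfType) (x : 'I_n) (v : 'rV[R]_n) : sv x v 0 = v 0 x.
Proof. by rewrite /sv (big_pred1 x) // => z; rewrite /= d0. Qed.


Lemma params : (c 1 = 1 /\ 0 < b 1 /\ 0 < b 2 /\ 0 < c 2 /\ 0 < c 3 /\ b 3 = 0)%N.
Proof.
have [x0 [z1 [z2 [y0 /andP[/andP[/andP[/andP[/andP[/andP[/andP[h1 h1n] h2] h2n] h3] h3n] e12] e23]]]]] := chain.
case: DR => [_ _ _ hc hb].
have hn := n_ge3.
have d1 : gdist e x0 z1 = 1%N.
  apply/eqP; rewrite eqn_leq -dist_ball ?h1 //=; try lia.
  by rewrite lt0n d0; apply/negP => /eqP E; move: h1n; rewrite E /= inE eqxx.
have d2 : gdist e x0 z2 = 2%N.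
  apply/eqP; rewrite eqn_leq -dist_ball ?h2 //=; try lia.
  by rewrite ltnNge -dist_ball ?h2n //; lia.
have d3' : gdist e x0 y0 = 3%N.
  apply/eqP; rewrite eqn_leq -dist_ball ?h3 //=; try lia.
  by rewrite ltnNge -dist_ball ?h3n //; lia.
have pos : forall (A : {set 'I_n}) z, z \in A -> (0 < #|A|)%N by move=> A z hz; apply/card_gt0P; exists z.
split.
  rewrite -(hc 1 x0 z1) // -(cards1 x0); apply: eq_card => z; rewrite !inE d0 /=.
  case: eqP => [->|]; rewrite ?andbF ?andbT //.
  move: h1; rewrite (ballSE x0 0) (negbTE h1n) /= => /existsP [w /andP [hw ew]].
  by move: hw; rewrite /= inE => /eqP E; rewrite DRsym -E.
split; first by rewrite -(hb 1 x0 z1) //; apply: (pos _ z2); rewrite inE e12 d2.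
split; first by rewrite -(hb 2 x0 z2) //; apply: (pos _ y0); rewrite inE e23 d3'.
split; first by rewrite -(hc 2 x0 z2) //; apply: (pos _ z1); rewrite inE DRsym e12 d1.
split; first by rewrite -(hc 3 x0 y0) //; apply: (pos _ z2); rewrite inE DRsym e23 d2.
by have := Nc4 x0 y0; rewrite /Nc (hb 3 x0 y0).
Qed.

Lemma a_nonneg (R : rcfType) : 0 <= aR R b c 1 /\ 0 <= aR R b c 3.
Proof.
have [x0 [z1 [z2 [y0 /andP[/andP[/andP[/andP[/andP[/andP[/andP[h1 h1n] h2] h2n] h3] h3n] e12] e23]]]]] := chain.
have hn := n_ge3.
have d1 : gdist e x0 z1 = 1%N.
  apply/eqP; rewrite eqn_leq -dist_ball ?h1 //=; try lia.
  by rewrite lt0n d0; apply/negP => /eqP E; move: h1n; rewrite E /= inE eqxx.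
have d3' : gdist e x0 y0 = 3%N.
  apply/eqP; rewrite eqn_leq -dist_ball ?h3 //=; try lia.
  by rewrite ltnNge -dist_ball ?h3n //; lia.
split.
  by have := Nval R x0 z1 1 isT; rewrite d1 /M /= => <-.
by have := Nval R x0 y0 3 isT; rewrite d3' /M /= => <-.
Qed.

Definition Fp (R : rcfType) (eta : R) : R :=
  let k := (b 0)%:R in let a1 := aR R b c 1 in let a2 := aR R b c 2 in
  let a3 := aR R b c 3 in
  (c 3)%:R * (b 2)%:R * (eta ^+ 2 - a1 * eta - k)
  + (a3 - eta) * ((eta - a2) * (eta ^+ 2 - a1 * eta - k) - (c 2)%:R * (b 1)%:R * eta).

Arguments Fp {R}.

Lemma eig_F (R : rcfType) (eta : R) : eigenvalue (adjmx R e) eta -> Fp eta = 0.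
Proof.
case/eigenvalueP => v hv vn0.
have [x hx] : exists x, v 0 x != 0.
  case: (pickP (fun x => v 0 x != 0)) => [x hx | h]; first by exists x.
  move/negP: vn0 => []; apply/eqP/rowP => j; rewrite mxE.
  by move: (h j) => /negbFE/eqP.
have [c1 _] := params.
have r0 := @recur R x v eta hv 0 isT.
have r1 := @recur R x v eta hv 1 isT.
have r2 := @recur R x v eta hv 2 isT.
have r3 := @recur R x v eta hv 3 isT.
rewrite !big_ord_recr big_ord0 /= /M /= c1 in r0.
rewrite !big_ord_recr big_ord0 /= /M /= in r1.
rewrite !big_ord_recr big_ord0 /= /M /= in r2.
rewrite !big_ord_recr big_ord0 /= /M /= in r3.
rewrite /Fp /=; apply: (@algF R _ _ _ _ _ _ _ _ eta (sv x v 0) (sv x v 1) (sv x v 2) (sv x v 3)).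
- by rewrite sv0.
- by rewrite r0; ring.
- by rewrite r1; ring.
- by rewrite r2; ring.
- by rewrite r3; ring.
Qed.


Lemma eig_k (R : rcfType) : eigenvalue (adjmx R e) ((b 0)%:R).
Proof.
apply/eigenvalueP; exists (const_mx 1).
  apply/rowP => j; rewrite !mxE.
  under eq_bigr do rewrite !mxE mul1r DRsym.
  rewrite (sum_cnt R j predT) -(deg_b0 j) mulr1; congr (_ %:R).
  by apply: eq_card => z; rewrite !inE andbT.
have hn := n_ge3.
apply/negP => /eqP/rowP /(_ (Ordinal (leq_trans (isT : (0 < 3)%N) hn))).
by rewrite !mxE => /eqP; rewrite oner_eq0.
Qed.

End Comb.

Section AlgT.
Local Open Scope ring_scope.

Lemma FG (R : realFieldType) (k a1 a2 a3 b1 b2 c2 c3 th t x : R) :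
  k = - (th * t) -> a1 = th + t -> b1 = - (th * t) - th - t - 1 ->
  c3 = - (th * t) - th -> a2 = - (th * t) - b2 - c2 -> a3 = th ->
  c3 * b2 * (x ^+ 2 - a1 * x - k)
  + (a3 - x) * ((x - a2) * (x ^+ 2 - a1 * x - k) - c2 * b1 * x)
  = (x - th) * Gp th t b2 c2 x.
Proof. move=> -> -> -> -> -> ->; rewrite /Gp; ring. Qed.

Lemma root_pos (R : rcfType) (a1 k th : R) :
  0 < k -> 0 <= th -> th ^+ 2 - a1 * th - k = 0 ->
  th = (a1 + Num.sqrt (a1 ^+ 2 + 4 * k)) / 2.
Proof.
move=> hk hth hU.
set s := Num.sqrt _.
have hs0 : 0 <= s := sqrtr_ge0 _.
have hs2 : s ^+ 2 = a1 ^+ 2 + 4 * k by rewrite sqr_sqrtr //; nra.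
have : (2 * th - a1 - s) * (2 * th - a1 + s) = 0.
  have -> : (2 * th - a1 - s) * (2 * th - a1 + s) = 4 * (th ^+ 2 - a1 * th - k) - (s ^+ 2 - a1 ^+ 2 - 4 * k) by ring.
  by rewrite hU hs2; ring.
move/eqP; rewrite mulf_eq0 => /orP [/eqP h|/eqP h].
  lra.
exfalso.
have hsa : a1 < s by nra.
lra.
Qed.

End AlgT.

Local Open Scope ring_scope.

Theorem theorem7 (R : rcfType) (n : nat) (e : rel 'I_n) (b c : nat -> nat)
  (theta : R) :
  distance_regular e 3 b c ->
  eigenvalue (adjmx R e) theta ->
  (std_seq b c theta 2 = 0 <-> theta = aR R b c 3) /\
  (theta = aR R b c 3 <->
     theta = (aR R b c 1 + Num.sqrt (aR R b c 1 ^+ 2 + 4 * (b 0%N)%:R)) / 2) /\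
  (std_seq b c theta 2 = 0 ->
     exists2 eta : R, eigenvalue (adjmx R e) eta & theta < eta /\
       forall eta' : R, eigenvalue (adjmx R e) eta' -> theta < eta' -> eta' = eta).
Proof.
move=> DR hth.
have [c1 [b1p [b2p [c2p [c3p b30]]]]] := params _ _ _ _ DR.
have [ha1 ha3] := a_nonneg _ _ _ _ DR R.
have hF := eig_F _ _ _ _ DR _ _ hth.
have hFk := eig_k _ _ _ _ DR R.
set k : R := (b 0)%:R in hF hFk *.
have ea1 : aR R b c 1 = k - (b 1)%:R - 1 by rewrite /aR c1.
have ea3 : aR R b c 3 = k - (c 3)%:R by rewrite /aR b30 subr0.
have hb1 : 1 <= ((b 1)%:R : R) by rewrite ler1n.
have hb2 : 1 <= ((b 2)%:R : R) by rewrite ler1n.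
have hc2 : 1 <= ((c 2)%:R : R) by rewrite ler1n.
have hc3 : 1 <= ((c 3)%:R : R) by rewrite ler1n.
have hk : 0 < k by lra.
set a1 := aR R b c 1 in ha1 ea1 hF *.
set a3 := aR R b c 3 in ha3 ea3 hF *.
have hu2 : std_seq b c theta 2 = 0 <-> theta ^+ 2 - a1 * theta - k = 0.
  rewrite /std_seq /= c1 -/k -/a1.
  have hk0 : k != 0 by rewrite gt_eqF.
  have hb10 : ((b 1)%:R : R) != 0 by rewrite gt_eqF //; lra.
  have -> : ((theta - a1) * (theta / k) - 1%:R * 1) / (b 1)%:R = (theta ^+ 2 - a1 * theta - k) / (k * (b 1)%:R). by field; rewrite hb10.
  split => [/eqP|->]; last by rewrite mul0r.
  by rewrite mulf_eq0 invr_eq0 mulf_eq0 (negbTE hk0) (negbTE hb10) !orbF => /eqP.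
rewrite /Fp /= -/k -/a1 -/a3 in hF.
have i2ii : theta ^+ 2 - a1 * theta - k = 0 -> theta = a3.
  move=> hU; move: hF; rewrite hU !mulr0 add0r sub0r mulrN.
  move/eqP; rewrite oppr_eq0 mulf_eq0 => /orP [/eqP h|]; first by lra.
  rewrite mulf_eq0 => /orP [|/eqP h0].
    by rewrite mulf_eq0 => /orP [] /eqP; lra.
  by move: hU; rewrite h0; lra.
have ii2i : theta = a3 -> theta ^+ 2 - a1 * theta - k = 0.
  move=> h3; move: hF; rewrite -h3 subrr mul0r addr0.
  move/eqP; rewrite mulf_eq0 => /orP [|/eqP //].
  by rewrite mulf_eq0 => /orP [] /eqP; lra.
split; first by rewrite hu2; split; [exact: i2ii | exact: ii2i].
split.
  split.
    move=> h3; apply: root_pos => //; first by lra.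
    exact: ii2i.
  move=> hr; apply: i2ii; rewrite hr; set s := Num.sqrt _.
  have hs2 : s ^+ 2 = a1 ^+ 2 + 4 * k by rewrite sqr_sqrtr //; nra.
  have -> : ((a1 + s) / 2) ^+ 2 - a1 * ((a1 + s) / 2) - k = (s ^+ 2 - a1 ^+ 2 - 4 * k) / 4 by field.
  by rewrite hs2; field.
move=> /hu2 hU.
have h3 := i2ii hU.
exists k => //; split; first by lra.
move=> eta' heig hlt.
have hF' := eig_F _ _ _ _ DR _ _ heig.
rewrite /Fp /= -/k -/a1 -/a3 in hF'.
set t := a1 - theta.
have hth0 : 0 < theta.
  rewrite lt0r; apply/andP; split; last by lra.
  by apply/eqP => h0; move: hU; rewrite h0; lra.
have tdef : t = a1 - theta by [].
have hkt : k = - (theta * t) by rewrite /t; lra.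
have ht : t < 0 by nra.
rewrite (@FG R k a1 (aR R b c 2) a3 (b 1)%:R (b 2)%:R (c 2)%:R (c 3)%:R theta t) in hF'.
- move/eqP: hF'; rewrite mulf_eq0 => /orP [/eqP h|/eqP hG]; first by lra.
  rewrite hkt; apply: (alg_main _ _ _ _ _ hth0 ht _ hb2 hc2 _ hlt hG); lra.
- by [].
- lra.
- lra.
- lra.
- rewrite /aR -/k; lra.
- by [].
Qed.
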